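(* Let $d\ge1$ and let $\Lambda\subset\mathbb R^d$ be a full-rank lattice with successive minima $\delta_1,\dots,\delta_d$. Then there exists a basis $\boldsymbol v^1,\dots,\boldsymbol v^d$ of $\Lambda$ such that (i) $|\boldsymbol v^s|_2\ll_d\delta_s$ for $s=1,\dots,d$; (ii) $\mathfrak I(\boldsymbol v^s)\subseteq\mathfrak I(\boldsymbol v^{s+1})$ for $s=1,\dots,d-1$.
   Context: For $\boldsymbol v\in\mathbb R^d$, $\mathfrak I(\boldsymbol v):=\{h\in\{1,\dots,d\}: v_h\neq0\}$ is its support. $|\cdot|_2$ is the Euclidean norm. The $s$-th successive minimum of $\Lambda$ is the least $r>0$ such that the Euclidean ball of radius $r$ centred at $0$ contains $s$ linearly independent vectors of $\Lambda$. *)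

(* Defs.v *)
From HB Require Import structures.
From mathcomp Require Import all_boot all_order all_algebra.
From mathcomp Require Import classical_sets reals.
Set Implicit Arguments. Unset Strict Implicit. Unset Printing Implicit Defensive.
Import Order.TTheory GRing.Theory Num.Theory.
Local Open Scope ring_scope.
Local Open Scope classical_set_scope.

Definition norm2 (R : realType) (d : nat) (v : 'rV[R]_d) : R :=
  Num.sqrt (\sum_(i < d) v 0 i ^+ 2).

Definition supp (R : realType) (d : nat) (v : 'rV[R]_d) : {set 'I_d} :=
  [set h | v 0 h != 0].

Definition lattice (R : realType) (d : nat) (B : 'M[R]_d) : set 'rV[R]_d :=
  [set x | exists z : 'rV[int]_d, x = map_mx (fun k : int => k%:~R) z *m B].

Definition is_lattice_basis (R : realType) (d : nat) (L : set 'rV[R]_d)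
    (V : 'M[R]_d) : Prop :=
  [/\ forall i : 'I_d, L (row i V),
      row_free V &
      forall x, L x -> exists z : 'rV[int]_d,
        x = map_mx (fun k : int => k%:~R) z *m V].

(* The s-th successive minimum of L: the least r > 0 such that the closed
   ball of radius r around 0 contains s linearly independent vectors of L
   (taken as the infimum of the set of such r, which is attained). *)
Definition succ_min (R : realType) (d : nat) (L : set 'rV[R]_d) (s : nat) : R :=
  inf [set r : R | 0 < r /\
        exists M : 'M[R]_(s, d),
          row_free M /\ forall i : 'I_s, L (row i M) /\ norm2 (row i M) <= r].

(* Main.v *)
Require Import Defs.
From HB Require Import structures.
From mathcomp Require Import all_boot all_order all_algebra.
From mathcomp Require Import boolp classical_sets reals.
From mathcomp Require Import lra zify.
Import Order.TTheory GRing.Theory Num.Theory.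
Local Open Scope ring_scope.
Set Implicit Arguments. Unset Strict Implicit. Unset Printing Implicit Defensive.

Section Norms.
Variable R : realType.
Variable d : nat.
Implicit Types u v : 'rV[R]_d.

Definition N1 v : R := \sum_i `|v 0 i|.

Lemma N1_ge0 v : 0 <= N1 v.
Proof. by apply: sumr_ge0 => i _. Qed.

Lemma norm2_ge0 v : 0 <= norm2 v.
Proof. exact: sqrtr_ge0. Qed.

Lemma abs_le_norm2 v i : `|v 0 i| <= norm2 v.
Proof.
rewrite /norm2 -sqrtr_sqr ler_wsqrtr //.
by rewrite (bigD1 i) //= lerDl sumr_ge0 // => j _; rewrite sqr_ge0.
Qed.

Lemma norm2_le_N1 v : norm2 v <= N1 v.
Proof.
rewrite /norm2 -(ger0_norm (N1_ge0 v)) -sqrtr_sqr ler_wsqrtr //.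
rewrite /N1 expr2 big_distrl /=; apply: ler_sum => i _.
rewrite big_distrr /= (bigD1 i) //= -normrM -expr2 (ger0_norm (sqr_ge0 _)) lerDl.
by apply: sumr_ge0 => j _; rewrite mulr_ge0.
Qed.

Lemma N1_le_norm2 v : N1 v <= d%:R * norm2 v.
Proof.
apply: le_trans (_ : \sum_(i < d) norm2 v <= _).
  by apply: ler_sum => i _; exact: abs_le_norm2.
by rewrite sumr_const card_ord mulr_natl.
Qed.

Lemma N1D u v : N1 (u + v) <= N1 u + N1 v.
Proof.
rewrite /N1 -big_split /=; apply: ler_sum => i _; rewrite mxE; exact: ler_normD.
Qed.

Lemma N1Z (c : R) v : N1 (c *: v) = `|c| * N1 v.
Proof. by rewrite /N1 mulr_sumr; apply: eq_bigr => i _; rewrite mxE normrM. Qed.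

Lemma N10 : N1 0 = 0.
Proof. by rewrite /N1 big1 // => i _; rewrite mxE normr0. Qed.

Lemma N1_sum (I : finType) (F : I -> 'rV[R]_d) :
  N1 (\sum_i F i) <= \sum_i N1 (F i).
Proof.
apply: (big_ind2 (fun x y => N1 x <= y)); first by rewrite N10.
  by move=> a b c e h1 h2; apply: le_trans (N1D _ _) _; exact: lerD.
by [].
Qed.

End Norms.
Section Lat.
Variable R : realType.
Variable d : nat.
Variable B : 'M[R]_d.
Hypothesis hB : B \in unitmx.

Local Notation imx M := (map_mx (fun k : int => k%:~R : R) M).

Definition Kb : R := \sum_i \sum_j `|invmx B i j|.

Lemma discrete (z : 'rV[int]_d) : z != 0 -> 1 <= Kb * norm2 (imx z *m B).
Proof.
move=> nz.
have [j Hj] : exists j, z 0 j != 0.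
  case: (pickP (fun j => z 0 j != 0)) => [j Hj|H]; first by exists j.
  have z0 : z = 0 by apply/rowP => j; rewrite mxE; move: (H j) => /negbFE/eqP.
  by rewrite z0 eqxx in nz.
set x := imx z *m B.
have ex : imx z = x *m invmx B by rewrite /x mulmxK.
have h1 : 1 <= `|(imx z) 0 j|.
  by rewrite mxE; apply: norm_intr_ge1; [exact: intr_int | rewrite intr_eq0].
apply: le_trans h1 _; rewrite ex mxE.
apply: le_trans (ler_norm_sum _ _ _) _.
apply: le_trans (_ : \sum_i norm2 x * `|invmx B i j| <= _).
  by apply: ler_sum => i _; rewrite normrM ler_wpM2r // abs_le_norm2.
rewrite -mulr_sumr mulrC ler_wpM2r ?norm2_ge0 //.
apply: ler_sum => i _; rewrite (bigD1 j) //= lerDl.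
by apply: sumr_ge0 => k _.
Qed.

End Lat.

Section Sub.
Variable R : realType.

Lemma row_free_sub (s j d : nat) (f : 'I_j -> 'I_s) (M : 'M[R]_(s, d)) :
  injective f -> row_free M -> row_free (rowsub f M).
Proof.
move=> finj fr; apply: inj_row_free => v.
rewrite rowsubE mulmxA => /eqP; rewrite mulmx_free_eq0 // => /eqP h.
apply/rowP => i; have := congr1 (fun m : 'rV[R]_s => m 0 (f i)) h.
rewrite !mxE (bigD1 i) //= big1 ?addr0.
  by rewrite !mxE eqxx mulr1.
by move=> k nk; rewrite !mxE (inj_eq finj) (negbTE nk) mulr0.
Qed.

End Sub.
Section SM.
Variable R : realType.
Variable d : nat.
Variable B : 'M[R]_d.
Hypothesis hB : B \in unitmx.
Local Open Scope classical_set_scope.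
Local Notation imx M := (map_mx (fun k : int => k%:~R : R) M).
Local Notation L := (lattice B).

Definition Smin (s : nat) : set R := [set r : R | 0 < r /\
        exists M : 'M[R]_(s, d),
          row_free M /\ forall i : 'I_s, L (row i M) /\ norm2 (row i M) <= r].

Lemma succ_minE s : succ_min L s = inf (Smin s).
Proof. by []. Qed.

Lemma Smin_sub j s r : (j <= s)%N -> Smin s r -> Smin j r.
Proof.
move=> h [r0 [M [fr HM]]]; split => //; exists (rowsub (widen_ord h) M); split.
  apply: row_free_sub => // a b /(congr1 (@nat_of_ord _)) /= ab; exact: val_inj.
by move=> i; rewrite row_rowsub; exact: HM.
Qed.

Lemma row_in_L i : L (row i B).
Proof.
by exists (row i 1%:M); rewrite map_row map_mx1 -row_mul mul1mx.
Qed.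

Lemma Smin_ne s : (s <= d)%N -> Smin s !=set0.
Proof.
move=> h; exists (1 + \sum_i norm2 (row i B)); split.
  by rewrite ltr_pwDl // sumr_ge0 // => i _; exact: norm2_ge0.
exists (rowsub (widen_ord h) B); split.
  by apply: row_free_sub; [move=> a b /(congr1 (@nat_of_ord _)) /= ab; exact: val_inj | rewrite row_free_unit].
move=> i; rewrite row_rowsub; split; first exact: row_in_L.
rewrite (bigD1 (widen_ord h i)) //= addrCA lerDl addr_ge0 //.
by apply: sumr_ge0 => k _; exact: norm2_ge0.
Qed.

Lemma Smin_lb s r : (1 <= s)%N -> Smin s r -> 1 <= Kb B * r /\ 0 < r.
Proof.
move=> h1 [r0 [M [fr HM]]]; split => //.
have [[z hz] hn] := HM (Ordinal h1).
have nz : z != 0.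
  apply/negP => /eqP z0; move: hz; rewrite z0 map_mx0 mul0mx rowE => /eqP.
  rewrite mulmx_free_eq0 // => /eqP /rowP /(_ (Ordinal h1)).
  by rewrite !mxE eqxx /= => /eqP; rewrite oner_eq0.
apply: le_trans (discrete hB nz) _; rewrite -hz ler_wpM2l //.
by apply: sumr_ge0 => i _; apply: sumr_ge0.
Qed.

Lemma Kb_gt0 : (1 <= d)%N -> 0 < Kb B.
Proof.
move=> h; have [r Hr] := Smin_ne h; have [h1 h2] := Smin_lb (isT : (1 <= 1)%N) Hr.
rewrite lt_neqAle; apply/andP; split.
  by apply/eqP => k0; move: h1; rewrite -k0 mul0r ler10.
by apply: sumr_ge0 => i _; apply: sumr_ge0.
Qed.

Lemma sm_gt0 s : (1 <= s)%N -> (s <= d)%N -> 0 < succ_min L s.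
Proof.
move=> h1 h2; have Kp := Kb_gt0 (leq_trans h1 h2).
apply: lt_le_trans (_ : (Kb B)^-1 <= _); first by rewrite invr_gt0.
rewrite succ_minE; apply: lb_le_inf; first exact: Smin_ne.
move=> r Hr; have [h3 h4] := Smin_lb h1 Hr.
by rewrite -div1r ler_pdivrMr // mulrC.
Qed.

Lemma Smin_hl s : has_lbound (Smin s).
Proof. by exists 0 => r [h _]; exact: ltW. Qed.

Lemma sm_mono j s : (j <= s)%N -> (s <= d)%N -> succ_min L j <= succ_min L s.
Proof.
move=> h1 h2; rewrite !succ_minE; apply: lb_le_inf; first exact: Smin_ne.
move=> r Hr; apply: ge_inf; first exact: Smin_hl.
exact: Smin_sub h1 Hr.
Qed.

Lemma sm_approx s : (1 <= s)%N -> (s <= d)%N ->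
  exists r, Smin s r /\ r <= 2 * succ_min L s.
Proof.
move=> h1 h2; have p := sm_gt0 h1 h2.
have : inf (Smin s) < 2 * inf (Smin s) by rewrite -succ_minE; lra.
move/(inf_lt (Smin_ne h2)) => [r Hr lr]; exists r; split => //.
by rewrite succ_minE ltW.
Qed.

End SM.
Section Greedy.
Variable R : realType.
Variable d : nat.
Variable B : 'M[R]_d.
Hypothesis hB : B \in unitmx.
Local Open Scope classical_set_scope.
Local Notation L := (lattice B).

Lemma greedy s : (s <= d)%N -> exists W : 'M[R]_(s, d), row_free W /\
  forall i : 'I_s, L (row i W) /\ norm2 (row i W) <= 2 * succ_min L i.+1.
Proof.
elim: s => [|s IH] h.
  by exists 0; split; [rewrite -row_leq_rank | case].
have [W [fW HW]] := IH (ltnW h).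
have [r [[r0 [M [fM HM]]] lr]] := sm_approx hB (isT : (0 < s.+1)%N) h.
have [i ni] : exists i, ~~ (row i M <= W)%MS.
  case: (pickP (fun i => ~~ (row i M <= W)%MS)) => [i Hi|H]; first by exists i.
  have sMW : (M <= W)%MS by apply/row_subP => i; move: (H i) => /negbFE.
  have := mxrankS sMW; move: fM fW; rewrite /row_free => /eqP -> /eqP ->.
  by rewrite ltnn.
rewrite -addn1; exists (col_mx W (row i M)); split.
  rewrite -row_leq_rank -addsmxE addn1.
  have [le eqC] := mxrank_leqif_sup (addsmxSl W (row i M)).
  move: fW; rewrite /row_free => /eqP rW.
  rewrite -{1}rW ltn_neqAle le andbT eqC addsmx_sub submx_refl /=.
  exact: ni.
move=> k; case: (splitP k) => [j kj|k2 kk].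
  have -> : k = lshift 1 j by apply: val_inj.
  rewrite rowKu /=; exact: HW.
have -> : k = rshift s k2 by apply: val_inj.
rewrite rowKd row_id; have [HL Hn] := HM i; split => //.
rewrite /= ord1 addn0; exact: le_trans Hn lr.
Qed.

End Greedy.
Section IntPart.
Variable n : nat.
Local Notation d := n.+1.
Variable A : 'M[int]_d.
Hypothesis hA : \det A != 0.
Local Notation G := (\adj A).
Local Notation D := (\det A).

Definition tri (s : nat) (y : 'rV[int]_d) :=
  forall j : 'I_d, (s < j)%N -> (y *m G) 0 j = 0.

Definition Sset (s k : nat) :=
  exists y, tri s y /\ (y *m G) 0 (inord s) = k%:Z.

Lemma Sset_D s : (s < d)%N -> Sset s `|D|%N.
Proof.
move=> hs; exists (Num.sg D *: row (inord s) A); split.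
  move=> j hj; rewrite -scalemxAl -row_mul mul_mx_adj !mxE.
  have : (inord s : 'I_d) != j.
    by apply/negP => /eqP ej; move: hj; rewrite -ej inordK // ltnn.
  by move/negbTE => ->; rewrite !mulr0.
rewrite -scalemxAl -row_mul mul_mx_adj !mxE eqxx mulr1n abszE.
by rewrite normrEsg.
Qed.

Definition Pk (s k : nat) : bool := (0 < k)%N && (`[< Sset s k >] || (d <= s)%N).

Lemma Pk_ex s : exists k, Pk s k.
Proof.
case: (ltnP s d) => h.
  exists `|D|%N; apply/andP; split; first by rewrite absz_gt0.
  by apply/orP; left; apply/asboolP; exact: Sset_D.
by exists 1%N; rewrite /Pk h orbT.
Qed.

Definition kmin s := ex_minn (Pk_ex s).

Lemma kminP s : (s < d)%N ->
  [/\ (0 < kmin s)%N, Sset s (kmin s) &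
      forall k, (0 < k)%N -> Sset s k -> (kmin s <= k)%N].
Proof.
move=> hs; rewrite /kmin; case: ex_minnP => k /andP [k0 Hk] kmin_min.
split => //.
  by move: Hk; rewrite leqNgt hs orbF => /asboolP.
move=> k' k'0 Hk'; apply: kmin_min; rewrite /Pk k'0 /=.
by apply/orP; left; apply/asboolP.
Qed.

Lemma kmin_leD s : (s < d)%N -> (kmin s <= `|D|)%N.
Proof.
move=> hs; have [_ _ H] := kminP hs; apply: H; first by rewrite absz_gt0.
exact: Sset_D.
Qed.

Lemma e_sub (y z : 'rV[int]_d) q j :
  ((y - q *: z) *m G) 0 j = (y *m G) 0 j - q * (z *m G) 0 j.
Proof. by rewrite mulmxBl -scalemxAl !mxE. Qed.

Lemma kmin_dvd s y : (s < d)%N -> tri s y ->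
  exists q, (y *m G) 0 (inord s) = q * (kmin s)%:Z.
Proof.
move=> hs ty; have [k0 [z0 [tz0 ez0]] kmn] := kminP hs.
set k := kmin s in k0 ez0 kmn *.
set e := (y *m G) 0 (inord s).
exists (e %/ k)%Z.
have kz : (k%:Z != 0) by rewrite eqz_nat -lt0n.
have r0 := modz_ge0 e kz.
have rlt : ((e %% k)%Z < k%:Z) by apply: ltz_pmod; rewrite ltz_nat.
suff : (e %% k)%Z = 0 by have := divz_eq e k%:Z => ? ?; lia.
apply/eqP; apply/negP => rnz.
have : Sset s `|(e %% k)%Z|%N.
  exists (y - (e %/ k)%Z *: z0); split.
    by move=> j hj; rewrite e_sub ty // tz0 // mulr0 subr0.
  rewrite e_sub ez0 gez0_abs //; have := divz_eq e k%:Z; lia.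
move/(kmn _); rewrite absz_gt0 => /(_ (introN idP rnz)).
have : (`|(e %% k)%Z|%N : int) = (e %% k)%Z by rewrite gez0_abs.
lia.
Qed.

End IntPart.
Section IntPart2.
Variable n : nat.
Local Notation d := n.+1.
Variable A : 'M[int]_d.
Hypothesis hA : \det A != 0.
Local Notation G := (\adj A).
Local Notation D := (\det A).
Local Notation kmin := (kmin hA).
Local Notation tri := (tri A).

Lemma span (Z : 'M[int]_d) :
  (forall s : 'I_d, tri s (row s Z) /\ (row s Z *m G) 0 s = (kmin s)%:Z) ->
  forall y : 'rV[int]_d, exists c : 'rV[int]_d, y = c *m Z.
Proof.
move=> HZ.
have P : forall m, (m <= d)%N -> forall y : 'rV[int]_d,
    (forall j : 'I_d, (m <= j)%N -> (y *m G) 0 j = 0) -> exists c : 'rV[int]_d, y = c *m Z.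
  elim => [|m IH] hm y hy.
    exists 0; rewrite mul0mx.
    have e0 : y *m G = 0 by apply/rowP => j; rewrite hy // mxE.
    have : (y *m G) *m A = D *: y by rewrite -mulmxA mul_adj_mx mul_mx_scalar.
    rewrite e0 mul0mx => /esym/eqP; rewrite scalemx_eq0 (negbTE hA) /=.
    by move/eqP.
  have hm' : (m < d)%N by [].
  set i := (Ordinal hm' : 'I_d).
  have ty : tri m y by move=> j hj; apply: hy.
  have [q eq] := kmin_dvd hA hm' ty.
  have ii : (inord m : 'I_d) = i by apply: val_inj; rewrite /= inordK.
  rewrite ii in eq.
  have [tZ eZ] := HZ i.
  have hy' : forall j : 'I_d, (m <= j)%N -> ((y - q *: row i Z) *m G) 0 j = 0.
    move=> j hj; rewrite e_sub.
    case: (eqVneq j i) => [->|nji].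
      by rewrite eq eZ subrr.
    have hj' : (m < j)%N.
      rewrite ltn_neqAle hj andbT; apply/negP => /eqP e; move/eqP: nji; apply; apply: val_inj; by rewrite /= -e.
    by rewrite hy // tZ // mulr0 subr0.
  have [c hc] := IH (ltnW hm) _ hy'.
  exists (c + q *: delta_mx 0 i).
  by rewrite mulmxDl -scalemxAl -rowE -hc subrK.
move=> y; apply: (P d (leqnn d)) => j hj.
by move: (ltn_ord j); rewrite ltnNge hj.
Qed.

Lemma reduce s : (s < d)%N -> exists y : 'rV[int]_d,
  [/\ tri s y, (y *m G) 0 (inord s) = (kmin s)%:Z &
      forall j : 'I_d, (j < s)%N -> 0 <= (y *m G) 0 j < (kmin j)%:Z].
Proof.
move=> hs.
suff P : forall t, (t <= s)%N -> exists y : 'rV[int]_d,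
  [/\ tri s y, (y *m G) 0 (inord s) = (kmin s)%:Z &
      forall j : 'I_d, (s - t <= j < s)%N -> 0 <= (y *m G) 0 j < (kmin j)%:Z].
  have [y [ty ey hy]] := P s (leqnn s); exists y; split => // j hj.
  by apply: hy; rewrite subnn hj.
elim => [|t IH] ht.
  have [_ [y [ty ey]] _] := kminP hA hs.
  by exists y; split => // j; rewrite subn0 => /andP [h1 h2]; move: (leq_ltn_trans h1 h2); rewrite ltnn.
have [y [ty ey hy]] := IH (ltnW ht).
set m := (s - t.+1)%N.
have hm : (m < d)%N by apply: leq_ltn_trans hs; rewrite leq_subr.
have hms : (m < s)%N by rewrite /m; lia.
have [k0 [z0 [tz0 ez0]] _] := kminP hA hm.
set k := kmin m in k0 ez0 *.
set e := (y *m G) 0 (inord m).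
set q := divz e k.
exists (y - q *: z0); split.
- by move=> j hj; rewrite e_sub ty // tz0 ?mulr0 ?subr0 //; apply: leq_trans hj; exact: ltnW.
- by rewrite e_sub ey tz0 ?mulr0 ?subr0 // inordK.
move=> j /andP [hj1 hj2]; rewrite e_sub.
case: (eqVneq (j : nat) m) => [ejm|nejm].
  have -> : j = inord m by apply: val_inj; rewrite /= inordK.
  rewrite inordK // ez0 -/k.
  have kz : (k%:Z != 0) by rewrite eqz_nat -lt0n.
  have := divz_eq e k%:Z.
  have := modz_ge0 e kz.
  have : ((e %% k)%Z < k%:Z) by apply: ltz_pmod; rewrite ltz_nat.
  rewrite /q; lia.
have hj3 : (m < j)%N by rewrite ltn_neqAle hj1 andbT eq_sym.
rewrite tz0 // mulr0 subr0; apply: hy; rewrite hj2 andbT.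
by rewrite /m in hj3 *; lia.
Qed.

End IntPart2.
Section RealPart.
Variable R : realType.
Variable n : nat.
Local Notation d := n.+1.
Variable B : 'M[R]_d.
Variable A : 'M[int]_d.
Hypothesis hA : \det A != 0.
Local Notation G := (\adj A).
Local Notation D := (\det A).
Local Notation imx M := (map_mx (fun k : int => k%:~R : R) M).

Lemma rep (y : 'rV[int]_d) : imx y *m B =
  \sum_j ((((y *m G) 0 j)%:~R / D%:~R) *: row j (imx A *m B)).
Proof.
have DR : (D%:~R : R) != 0 by rewrite intr_eq0.
have h : imx (y *m G) *m imx A = D%:~R *: imx y.
  by rewrite -map_mxM -mulmxA mul_adj_mx mul_mx_scalar map_mxZ.
have h2 : imx y = (D%:~R)^-1 *: (imx (y *m G) *m imx A).
  by rewrite h scalerA mulVf // scale1r.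
rewrite h2 -scalemxAl -mulmxA mulmx_sum_row scaler_sumr.
apply: eq_bigr => j _; rewrite scalerA mxE mulrC.
by [].
Qed.

Lemma vr_bound (y : 'rV[int]_d) s :
  (forall j : 'I_d, (s < j)%N -> (y *m G) 0 j = 0) ->
  (forall j : 'I_d, (j <= s)%N -> `|(y *m G) 0 j| <= `|D|) ->
  N1 (imx y *m B) <= \sum_(j < d) (if (j <= s)%N then N1 (row j (imx A *m B)) else 0).
Proof.
move=> h0 h1; rewrite rep; apply: le_trans (N1_sum _) _.
apply: ler_sum => j _; rewrite N1Z.
case: leqP => hj.
  apply: ler_piMl; first exact: N1_ge0.
  rewrite normrM normfV -!intr_norm ler_pdivrMr; last first.
    by rewrite ltr0z normr_gt0.
  by rewrite mul1r ler_int h1.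
by rewrite h0 // mul0r normr0 mul0r.
Qed.

End RealPart.
Section Pick.
Variable R : realType.
Variable n : nat.
Local Notation d := n.+1.

Definition goodk (u v : 'rV[R]_d) (k : 'I_d.+1) : bool :=
  [forall h, (v 0 h != 0) ==> (u 0 h + (k : nat)%:R * v 0 h != 0)].

Definition pickk (u v : 'rV[R]_d) : nat :=
  odflt 0%N (omap (@nat_of_ord _) [pick k | goodk u v k]).

Lemma pickkP u v : (pickk u v <= d)%N /\
  forall h, v 0 h != 0 -> u 0 h + (pickk u v)%:R * v 0 h != 0.
Proof.
rewrite /pickk; case: pickP => [k Hk|H] /=.
  split; first by rewrite -ltnS.
  by move=> h vh; move/forallP: Hk => /(_ h) /implyP; apply.
exfalso.
pose f (k : 'I_d.+1) : 'I_d :=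
  odflt ord0 [pick h | (v 0 h != 0) && (u 0 h + (k : nat)%:R * v 0 h == 0)].
have fP : forall k, (v 0 (f k) != 0) && (u 0 (f k) + (k : nat)%:R * v 0 (f k) == 0).
  move=> k; rewrite /f; case: pickP => [h Hh|H2] //=.
  move/negbT: (H k); rewrite /goodk negb_forall => /existsP [h].
  by rewrite negb_imply negbK => Hh; move: (H2 h); rewrite Hh.
have finj : injective f.
  move=> k1 k2 e; move: (fP k1) (fP k2); rewrite e.
  move=> /andP [nz /eqP e1] /andP [_ /eqP e2]; apply: val_inj => /=.
  have : ((k1 : nat)%:R - (k2 : nat)%:R) * v 0 (f k2) = 0 :> R.
    by rewrite mulrBl; apply/eqP; rewrite subr_eq0 -(inj_eq (addrI (u 0 (f k2)))) e1 e2.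
  move/eqP; rewrite mulf_eq0 (negbTE nz) orbF subr_eq0 eqr_nat.
  by move/eqP.
by have := leq_card f finj; rewrite !card_ord ltnn.
Qed.

End Pick.
Section Construct.
Variable R : realType.
Variable n : nat.
Local Notation d := n.+1.
Variable B : 'M[R]_d.
Hypothesis hB : B \in unitmx.
Variable A : 'M[int]_d.
Hypothesis hA : \det A != 0.
Local Notation G := (\adj A).
Local Notation D := (\det A).
Local Notation imx M := (map_mx (fun k : int => k%:~R : R) M).
Local Notation L := (lattice B).
Local Notation dl s := (succ_min (lattice B) s).
Hypothesis hW : forall j : 'I_d,
  N1 (row j (imx A *m B)) <= (2 * d)%:R * dl j.+1.

Definition vr (y : 'rV[int]_d) := imx y *m B.

Definition redi (i : 'I_d) : 'rV[int]_d := projT1 (cid (reduce hA (ltn_ord i))).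
Definition redn (s : nat) := redi (inord s).

Lemma rednP s : (s < d)%N ->
  [/\ tri A s (redn s), (redn s *m G) 0 (inord s) = (kmin hA s)%:Z &
      forall j : 'I_d, (j < s)%N -> 0 <= (redn s *m G) 0 j < (kmin hA j)%:Z].
Proof.
move=> hs; rewrite /redn /redi.
case: (cid _) => y /=; rewrite inordK //.
Qed.

Fixpoint zz (s : nat) : 'rV[int]_d :=
  match s with
  | 0 => redn 0
  | s'.+1 => redn s'.+1 + (pickk (vr (redn s'.+1)) (vr (zz s')))%:Z *: zz s'
  end.

Lemma vr_add y z (k : nat) : vr (y + k%:Z *: z) = vr y + k%:R *: vr z.
Proof. by rewrite /vr map_mxD map_mxZ mulmxDl -scalemxAl. Qed.

Lemma e_add (y z : 'rV[int]_d) q j :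
  ((y + q *: z) *m G) 0 j = (y *m G) 0 j + q * (z *m G) 0 j.
Proof. by rewrite mulmxDl -scalemxAl !mxE. Qed.

Lemma zz_tri s : (s < d)%N -> tri A s (zz s) /\ (zz s *m G) 0 (inord s) = (kmin hA s)%:Z.
Proof.
elim: s => [|s IH] hs /=.
  by have [t e _] := rednP hs.
have [t1 e1 _] := rednP hs; have [t2 e2] := IH (ltnW hs); split.
  by move=> j hj; rewrite e_add t1 // t2 ?mulr0 ?addr0 //; exact: ltnW.
by rewrite e_add e1 t2 ?mulr0 ?addr0 // inordK.
Qed.

Lemma zz_supp s : supp (vr (zz s)) \subset supp (vr (zz s.+1)).
Proof.
have -> : zz s.+1 = redn s.+1 + (pickk (vr (redn s.+1)) (vr (zz s)))%:Z *: zz s by [].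
rewrite vr_add; apply/fintype.subsetP => h; rewrite /supp !inE => nz.
have [_ P] := pickkP (vr (redn s.+1)) (vr (zz s)).
by move: (P h nz); rewrite !mxE.
Qed.

Lemma dl_ge0 s : (s < d)%N -> 0 <= dl s.+1.
Proof. by move=> hs; apply: ltW; apply: sm_gt0. Qed.

Definition cc : R := (2 * d * d)%:R.

Lemma redn_norm s : (s < d)%N -> N1 (vr (redn s)) <= cc * dl s.+1.
Proof.
move=> hs; have [t e hr] := rednP hs.
apply: le_trans (@vr_bound R n B A hA (redn s) s _ _) _.
- exact: t.
- move=> j hj; case: (ltngtP j s) => hjs.
  + have [h1 h2] := andP (hr j hjs); rewrite ger0_norm //.
    apply: le_trans (ltW h2) _; rewrite -abszE lez_nat; exact: kmin_leD.
  + by move: hj; rewrite leqNgt hjs.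
  + have -> : j = inord s by apply: val_inj; rewrite /= inordK.
    by rewrite e -abszE lez_nat kmin_leD.
apply: le_trans (_ : \sum_(j < d) ((2 * d)%:R * dl s.+1) <= _).
  apply: ler_sum => j _; case: leqP => hj.
    apply: le_trans (hW j) _; rewrite ler_wpM2l //; apply: sm_mono => //.
  by apply: mulr_ge0 => //; exact: dl_ge0.
rewrite sumr_const card_ord /cc -[_ *+ d]mulr_natr mulrAC -natrM.
by [].
Qed.

Lemma zz_norm s : (s < d)%N -> N1 (vr (zz s)) <= cc * d.+1%:R ^+ s * dl s.+1.
Proof.
elim: s => [|s IH] hs /=.
  by rewrite expr0 mulr1; exact: redn_norm.
have [kle _] := pickkP (vr (redn s.+1)) (vr (zz s)).
set k := pickk _ _ in kle *.
rewrite vr_add; apply: le_trans (N1D _ _) _; rewrite N1Z.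
have h1 := redn_norm hs; have h2 := IH (ltnW hs).
have mono : dl s.+1 <= dl s.+2 by apply: sm_mono.
have d0 := dl_ge0 (ltnW hs).
have c0 : 0 <= cc by [].
have p0 : 1 <= d.+1%:R ^+ s :> R by rewrite exprn_ege1 // ler1n.
have kR : `|k%:R| <= d%:R :> R by rewrite normr_nat ler_nat.
have N0 := N1_ge0 (vr (zz s)).
have : `|(k%:R : R)| * N1 (vr (zz s)) <= d%:R * (cc * d.+1%:R ^+ s * dl s.+2).
  apply: ler_pM; [exact: normr_ge0 | exact: N0 | exact: kR | ].
  apply: le_trans h2 _; rewrite ler_wpM2l // mulr_ge0 //; lra.
move=> h3.
rewrite exprS.
set P := _ ^+ s in p0 h3 *.
set dd := dl s.+2 in h1 h3 *.
have dd0 : 0 <= dd by apply: le_trans mono; exact: d0.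
have e : d.+1%:R = d%:R + 1 :> R by rewrite -natr1.
rewrite e.
have hh : 0 <= (P - 1) * (cc * dd) by apply: mulr_ge0; [lra | exact: mulr_ge0].
set N := N1 (vr (redn s.+1)) in h1 *.
set M := _ * N1 (vr (zz s)) in h3 *.
nra.
Qed.

End Construct.
Unset Implicit Arguments.

(* Indices are 0-based: row s of V is v^(s+1); its bound is delta_(s+1). *)
Theorem mainTheorem7 (R : realType) (d : nat) (hd : (1 <= d)%N) :
  exists C : R, 0 < C /\
  forall B : 'M[R]_d, B \in unitmx ->
  exists V : 'M[R]_d,
    [/\ is_lattice_basis (lattice B) V,
        forall s : 'I_d, norm2 (row s V) <= C * succ_min (lattice B) s.+1 &
        forall s t : 'I_d, nat_of_ord t = s.+1 ->
          supp (row s V) \subset supp (row t V)].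
Proof.
case: d hd => [//|n] _.
exists (cc R n * n.+2%:R ^+ n.+1); split.
  by apply: mulr_gt0; [rewrite /cc ltr0n | apply: exprn_gt0; rewrite ltr0n].
move=> B hB.
have [W [fW HW]] := greedy hB (leqnn n.+1).
have HWL : forall i, exists z : 'rV[int]_n.+1, row i W = map_mx (fun k : int => k%:~R : R) z *m B.
  by move=> i; have [[z hz] _] := HW i; exists z.
pose A := \matrix_(i < n.+1) projT1 (cid (HWL i)).
have hWA : W = map_mx (fun k : int => k%:~R : R) A *m B.
  apply/row_matrixP => i; rewrite row_mul -map_row rowK.
  exact: (projT2 (cid (HWL i))).
have hA : \det A != 0.
  have : map_mx (fun k : int => k%:~R : R) A *m B \in unitmx by rewrite -hWA -row_free_unit.
  by rewrite unitmx_mul => /andP [u _]; move: u; rewrite unitmxE det_map_mx unitfE intr_eq0.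
have hW : forall j : 'I_n.+1,
    N1 (row j (map_mx (fun k : int => k%:~R : R) A *m B)) <= (2 * n.+1)%:R * succ_min (lattice B) j.+1.
  move=> j; rewrite -hWA; apply: le_trans (N1_le_norm2 _) _.
  rewrite natrM (mulrC 2) -mulrA ler_wpM2l //.
  by have [_ h] := HW j.
pose Z := \matrix_(i < n.+1) zz B hA i.
pose V := map_mx (fun k : int => k%:~R : R) Z *m B.
have rowV : forall i : 'I_n.+1, row i V = vr B (zz B hA i).
  by move=> i; rewrite /V row_mul -map_row rowK.
have HZ : forall s : 'I_n.+1, tri A s (row s Z) /\ (row s Z *m \adj A) 0 s = (kmin hA s)%:Z.
  move=> s; rewrite rowK; have [t e] := zz_tri B hA (ltn_ord s).
  by rewrite inord_val in e.
have sp := @span n A hA Z HZ.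
exists V; split.
- split.
  + by move=> i; exists (row i Z); rewrite /V row_mul map_row.
  + pose Wi := \matrix_(i < n.+1) projT1 (cid (sp (delta_mx 0 i))).
    have hWZ : Wi *m Z = 1%:M.
      apply/row_matrixP => i; rewrite row_mul rowK -(projT2 (cid (sp (delta_mx 0 i)))).
      by rewrite rowE mulmx1.
    have : map_mx (fun k : int => k%:~R : R) Wi *m map_mx (fun k : int => k%:~R : R) Z = 1%:M.
      by rewrite -map_mxM hWZ map_mx1.
    move/mulmx1_unit => [_ uZ].
    by rewrite row_free_unit /V unitmx_mul uZ hB.
  + move=> x [z ->]; have [c hc] := sp z; exists c.
    by rewrite hc map_mxM /V mulmxA.
- move=> s; rewrite rowV; apply: le_trans (norm2_le_N1 _) _.
  apply: le_trans (zz_norm hB hA hW (ltn_ord s)) _.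
  apply: ler_wpM2r.
  have := dl_ge0 hB (ltn_ord s); move=> h; exact h.
  apply: ler_pM; [by rewrite /cc ler0n | by apply: exprn_ge0; rewrite ler0n | by [] | ].
  rewrite ler_eXn2l ?ltr1n //.
  exact: ltnW (ltn_ord s).
- move=> s t ht; rewrite !rowV ht.
  exact: zz_supp.
Qed.
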